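(* For every $i$ with $0\le i\le\rho(m)-1$ and every integer $t$ with $1\le t\le p_i-1$, we have $x^{\alpha_i}(k+t)=0$.
   Context: For $u\in\mathbb{R}$ let $\mathbf 1[u]=1$ if $u\ge 0$ and $\mathbf 1[u]=0$ if $u<0$. Let $m$ be a positive integer and let $\rho(m)$ denote the number of primes $p$ with $2m<p<3m$; assume $\rho(m)\ge 2$. List these primes as $p_0>p_1>\dots>p_{\rho(m)-1}$ and put $\alpha_i=3m-p_i$. Let $k=(6m-1)\rho(m)$, $\mu_i=\lfloor k/p_i\rfloor$, $\beta_i=k-p_i\mu_i$. Define weights $\bar a_j$, $1\le j\le k$: if $\rho(m)$ is even, $\bar a_j=2$ if $j=\ell p_i$ for some $i$ and some $\ell$ with $1\le \ell\le 3\rho(m)/2$, $\bar a_j=-2$ if $j=\ell p_i$ with $3\rho(m)/2<\ell\le 2\rho(m)$, and $\bar a_j=0$ otherwise; if $\rho(m)$ is odd, $\bar a_j=2$ if $j=\ell p_i$ with $1\le\ell\le (3\rho(m)-1)/2$, $\bar a_j=-2$ if $j=\ell p_i$ with $(3\rho(m)+1)/2\le \ell\le 2\rho(m)-2$, $\bar a_j=-1$ if $j=\ell p_i$ with $\ell\in\{2\rho(m)-1,2\rho(m)\}$, and $\bar a_j=0$ otherwise (well defined since the sets $\{\ell p_i:1\le\ell\le2\rho(m)\}$ are pairwise disjoint). Let $\bar\theta=2\rho(m)$. For each $i$ define $x^{\alpha_i}(t)$ for $0\le t\le k-1$ by $x^{\alpha_i}(t)=1$ if $t=\beta_i+\ell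 p_i$ for some $0\le \ell\le\mu_i-1$ and $x^{\alpha_i}(t)=0$ otherwise, and for $t\ge k$ by $x^{\alpha_i}(t)=\mathbf 1\big[\sum_{j=1}^k \bar a_j x^{\alpha_i}(t-j)-\bar\theta\big]$. *)

(* Defs.v *)
From mathcomp Require Import all_boot all_order all_algebra.
Set Implicit Arguments. Unset Strict Implicit. Unset Printing Implicit Defensive.
Import Order.TTheory GRing.Theory Num.Theory.

(* The primes p with 2m < p < 3m, listed in DECREASING order p_0 > p_1 > ... *)
Definition primes_dec (m : nat) : seq nat :=
  rev [seq p <- iota (2 * m).+1 (3 * m - (2 * m).+1) | prime p].

Definition rho (m : nat) : nat := size (primes_dec m).

Definition pr (m i : nat) : nat := nth 0 (primes_dec m) i.

Definition alpha (m i : nat) : nat := 3 * m - pr m i.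

Definition kk (m : nat) : nat := (6 * m - 1) * rho m.

Definition mu (m i : nat) : nat := kk m %/ pr m i.
Definition beta (m i : nat) : nat := kk m - pr m i * mu m i.

(* weight of the multiple l * p_i (1 <= l <= 2 rho), depending on parity of rho *)
Definition wgt (r l : nat) : int :=
  if ~~ odd r then
    (if l <= (3 * r) %/ 2 then Posz 2 else (- 2)%R)
  else
    (if l <= (3 * r - 1) %/ 2 then Posz 2
     else if l <= 2 * r - 2 then (- 2)%R
     else (- 1)%R).

(* \bar a_j : if j = l p_i for some i and 1 <= l <= 2 rho(m), the weight of l
   (the i is unique since the sets {l p_i} are pairwise disjoint); else 0. *)
Definition abar (m j : nat) : int :=
  let P := primes_dec m in
  let ok := fun p => (p %| j) && (0 < j %/ p <= 2 * rho m) in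
  if has ok P then wgt (rho m) (j %/ nth 0 P (find ok P)) else 0%R.

Definition theta (m : nat) : int := Posz (2 * rho m).

Definition ind (u : int) : int := if (0 <= u)%R then 1%R else 0%R.

(* Generic threshold recursion of order k with weights a, threshold th, and
   initial values init t for 0 <= t <= k-1:
   x(t) = 1[ sum_{j=1}^k a_j x(t-j) - th ] for t >= k.
   hist n is the list [x(0); ...; x(n-1)]. *)
Fixpoint hist (k : nat) (a : nat -> int) (th : int) (init : nat -> int)
  (n : nat) : seq int :=
  match n with
  | 0 => [::]
  | n'.+1 =>
      let h := hist k a th init n' in
      rcons h (if n' < k then init n'
               else ind ((\sum_(1 <= j < k.+1) a j * nth 0%R h (n' - j)) - th)%R)
  end.

Definition xseq (k : nat) (a : nat -> int) (th : int) (init : nat -> int)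
  (t : nat) : int := nth 0%R (hist k a th init t.+1) t.

Definition init_alpha (m i t : nat) : int :=
  if has (fun l => t == beta m i + l * pr m i) (iota 0 (mu m i)) then 1%R else 0%R.

Definition x_alpha (m i t : nat) : int :=
  xseq (kk m) (abar m) (theta m) (init_alpha m i) t.

(* Main.v *)
Require Import Defs.
From mathcomp Require Import all_boot all_order all_algebra.
From mathcomp Require Import zify.
Import Order.TTheory GRing.Theory Num.Theory.
Set Implicit Arguments. Unset Strict Implicit.

Section H.
Variables (k : nat) (a : nat -> int) (th : int) (init : nat -> int).

Lemma size_hist n : size (hist k a th init n) = n.
Proof. by elim: n => //= n IH; rewrite size_rcons IH. Qed.

Lemma nth_hist n i : i < n -> nth 0%R (hist k a th init n) i = xseq k a th init i.
Proof.
elim: n => // n IH lin.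
rewrite [hist _ _ _ _ n.+1]/= nth_rcons size_hist.
case: ltnP => [/IH //| hn].
have ei : i = n by apply/eqP; rewrite eqn_leq hn -ltnS lin.
by subst i; rewrite eqxx /xseq /= nth_rcons size_hist ltnn eqxx.
Qed.

Lemma xseqE n : xseq k a th init n =
  if n < k then init n else
  ind ((\sum_(1 <= j < k.+1) a j * xseq k a th init (n - j)) - th)%R.
Proof.
rewrite /xseq /= nth_rcons size_hist ltnn eqxx; case: ltnP => // hk.
congr (ind (_ - _)%R); apply: eq_big_nat => j /andP[j1 j2].
by rewrite nth_hist //; lia.
Qed.

End H.

Lemma mem_pd m x : 0 < m -> (x \in primes_dec m) = prime x && (2 * m < x < 3 * m).
Proof.
move=> hm; rewrite /primes_dec mem_rev mem_filter mem_iota; congr (_ && _).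
apply/idP/idP => /andP[h1 h2]; apply/andP; split; lia.
Qed.

Lemma uniq_pd m : uniq (primes_dec m).
Proof. by rewrite /primes_dec rev_uniq filter_uniq // iota_uniq. Qed.

Lemma rho_le m : rho m <= m - 1.
Proof.
rewrite /rho /primes_dec size_rev size_filter.
apply: (leq_trans (count_size _ _)); rewrite size_iota; lia.
Qed.

Definition okp m j p := (p %| j) && (0 < j %/ p <= 2 * rho m).
Definition fp m j := nth 0 (primes_dec m) (find (okp m j) (primes_dec m)).

Lemma abarE m j : abar m j =
  if has (okp m j) (primes_dec m) then wgt (rho m) (j %/ fp m j) else 0%R.
Proof. by []. Qed.

Lemma abar_le2 m j : (abar m j <= 2)%R.
Proof.
rewrite abarE; case: has => //; rewrite /wgt.
by case: odd => /=; repeat case: ifP.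
Qed.

Lemma fp_prop m j : has (okp m j) (primes_dec m) ->
  fp m j \in primes_dec m /\ okp m j (fp m j).
Proof.
move=> h; split; last exact: nth_find.
by rewrite /fp mem_nth // -has_find.
Qed.

Lemma fp_inj m p j1 j2 : 0 < m -> prime p -> 2 * rho m < p ->
  has (okp m j1) (primes_dec m) -> has (okp m j2) (primes_dec m) ->
  j1 %% p = j2 %% p -> j1 %% p != 0 -> fp m j1 = fp m j2 -> j1 <= j2 -> j1 = j2.
Proof.
move=> hm pp hp h1 h2 emod nz ef le12.
have [q1 o1] := fp_prop h1; have [q2 o2] := fp_prop h2.
rewrite -ef in q2 o2; set q := fp m j1 in q1 q2 o1 o2 *.
move: (q1); rewrite mem_pd // => /andP[qp _].
move: o1 o2 => /andP[d1 /andP[_ l1]] /andP[d2 /andP[_ l2]].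
have qnp : q != p.
  apply/eqP=> eq; move: nz; rewrite -eq; by move/dvdnP: d1 => [c ->]; rewrite modnMl.
have cop : coprime p q by rewrite coprime_sym prime_coprime // dvdn_prime2 // eq_sym.
have dp : p %| j2 - j1 by rewrite -eqn_mod_dvd // emod.
have dq : q %| j2 - j1 by rewrite dvdn_sub.
have dpq : p * q %| j2 - j1 by rewrite Gauss_dvd // dp dq.
have e2 : j2 = j2 %/ q * q by rewrite divnK.
have b2 : j2 <= 2 * rho m * q by rewrite e2 leq_mul2r l2 orbT.
have qpos : 0 < q by exact: prime_gt0.
case: (posnP (j2 - j1)) => [z|pos].
  by apply/eqP; rewrite eqn_leq le12 -subn_eq0 z.
have h3 := dvdn_leq pos dpq.
have h4 : 2 * rho m * q < p * q by rewrite ltn_mul2r qpos hp.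
have : j2 - j1 <= j2 by apply: leq_subr.
move: h3 h4 b2; clear; lia.
Qed.

Lemma count_bound m p t n : 0 < m -> p \in primes_dec m -> 2 * rho m < p -> 0 < t < p ->
  count (fun j => (j %% p == t %% p) && has (okp m j) (primes_dec m)) (iota 1 n)
  <= rho m - 1.
Proof.
move=> hm pin hp /andP[t0 tp].
have pp : prime p by move: pin; rewrite mem_pd // => /andP[].
set Q := (fun j => _ && _).
rewrite -size_filter -(size_map (fp m)).
have -> : rho m - 1 = size (rem p (primes_dec m)) by rewrite size_rem // subn1.
apply: uniq_leq_size.
  rewrite map_inj_in_uniq; first by rewrite filter_uniq // iota_uniq.
  move=> j1 j2; rewrite !mem_filter => /andP[/andP[/eqP e1 h1] _] /andP[/andP[/eqP e2 h2] _] ef.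
  have nz : j1 %% p != 0 by rewrite e1 modn_small //; lia.
  case: (leqP j1 j2) => le.
    by apply: (fp_inj hm pp hp h1 h2) => //; rewrite e1 e2.
  apply/esym; apply: (fp_inj hm pp hp h2 h1) => //; first by rewrite e1 e2.
    by rewrite e2 -e1.
  exact: ltnW.
move=> y /mapP[j]; rewrite mem_filter => /andP[/andP[/eqP e1 h1] _] ->.
have [q1 /andP[d1 _]] := fp_prop h1.
rewrite (mem_rem_uniq _ (uniq_pd m)) inE q1 andbT.
apply/eqP => eq; have dj : p %| j by rewrite -eq.
move: dj; rewrite /dvdn e1 modn_small //; lia.
Qed.

Lemma sum_if2 (s : seq nat) (Q : pred nat) :
  (\sum_(j <- s) (if Q j then 2 else 0 : int))%R = Posz (2 * count Q s).
Proof.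
elim: s => [|x s IH]; first by rewrite big_nil.
rewrite big_cons IH /=; case: (Q x) => /=; lia.
Qed.

Lemma x_bin m i n : x_alpha m i n = 0%R \/ x_alpha m i n = 1%R.
Proof.
rewrite /x_alpha xseqE; case: ltnP => _.
  by rewrite /init_alpha; case: ifP; auto.
by rewrite /ind; case: ifP; auto.
Qed.

Lemma init_mod m i n : init_alpha m i n = 1%R -> n %% pr m i = kk m %% pr m i.
Proof.
rewrite /init_alpha; case: ifP => [/hasP[l _ /eqP ->] _|_ //].
have -> : beta m i = kk m %% pr m i by rewrite /beta /mu; have := divn_eq (kk m) (pr m i); lia.
by rewrite addnC modnMDl modn_mod.
Qed.

Lemma fin_helper (S : int) c r : (0 <= S - Posz (2 * r))%R -> (S <= Posz (2 * c))%R ->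
  c <= r - 1 -> 2 <= r -> False.
Proof. lia. Qed.

Theorem lemma6 (m : nat) (hm : 0 < m) (hrho : 2 <= rho m) :
  forall i t : nat, i <= rho m - 1 -> 1 <= t <= pr m i - 1 ->
    x_alpha m i (kk m + t) = 0%R.
Proof.
move=> i t hi /andP[t1 tp].
have pin : pr m i \in primes_dec m by rewrite /pr mem_nth // -/(rho m); lia.
set p := pr m i in tp pin *.
have [pp /andP[p2 p3]] : prime p /\ (2 * m < p < 3 * m).
  by move: pin; rewrite mem_pd // => /andP[].
have hp : 2 * rho m < p by have := rho_le m; lia.
set k := kk m.
elim: t {-2}t (leqnn t) t1 tp => [|T IH] s hs s1 sp; first lia.
rewrite /x_alpha xseqE ltnNge leq_addr /=.
set Q := fun j => (j %% p == s %% p) && has (okp m j) (primes_dec m).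
have claim : forall j, 1 <= j <= k -> x_alpha m i (k + s - j) = 1%R -> j %% p = s %% p.
  move=> j /andP[j1 jk] x1.
  case: (ltngtP (k + s - j) k) => c.
  - move: x1; rewrite /x_alpha xseqE c => /init_mod hm'.
    have e : k + s - j + j = k + s by lia.
    rewrite -/p -/k in hm'.
    have h1 : (k + s - j + j) %% p = (k + j) %% p by rewrite -modnDml hm' modnDml.
    by apply/eqP; rewrite -(eqn_modDl k) -h1 e.
  - have e : k + s - j = k + (k + s - j - k) by lia.
    move: x1; rewrite e IH //; lia.
  - have -> : j = s by lia.
    by [].
have term : forall j, 1 <= j < k.+1 ->
   (abar m j * xseq k (abar m) (theta m) (init_alpha m i) (k + s - j)
     <= if Q j then 2 else 0)%R.
  move=> j hj; rewrite -/(x_alpha m i _).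
  case: (x_bin m i (k + s - j)) => ex; rewrite ex; first by rewrite mulr0; case: (Q j).
  rewrite mulr1 /Q; case hh: (has _ _); last by rewrite abarE hh andbF.
  have hj' : 1 <= j <= k by lia.
  rewrite (claim j hj' ex) eqxx /=.
  exact: abar_le2.
have := ler_sum_nat term.
rewrite sum_if2 /index_iota subSS subn0.
have cb := @count_bound m p s k hm pin hp.
have cb' : count Q (iota 1 k) <= rho m - 1 by apply: cb; lia.
move=> le; rewrite /ind /theta; case: ifP => // h.
exfalso; exact: (fin_helper h le cb' hrho).
Qed.
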